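(* Let $b\ge3$, $D\subset\{0,\dots,b-1\}$ with $0\in D$ and $2\le|D|<b$, and list $\mathcal C=\mathcal C_{b,D}$ increasingly as $k_1<k_2<\cdots$. Then for every $q\in\mathbb N$, $$\lim_{N\to\infty}\frac1N\#\{n\le N: k_n\equiv 0\pmod q\}$$ exists and is strictly positive.
   Context: $\mathcal C_{b,D}=\{\sum_{j=0}^{k} d_j b^j : k\in\mathbb N_0,\ d_j\in D\}$. *)

(* Defs.v *)
From Stdlib Require Import Reals.
From mathcomp Require Import all_boot.

Set Implicit Arguments.
Unset Strict Implicit.
Unset Printing Implicit Defensive.

Definition inC (b : nat) (D : {set 'I_b}) (x : nat) : Prop :=
  exists (k : nat) (d : nat -> 'I_b),
    (forall j, j <= k -> d j \in D) /\
    x = \sum_(j < k.+1) (nat_of_ord (d j)) * b ^ j.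

(* number of n in {0,..,N-1} with q | k n  (0-indexed enumeration) *)
Definition count_div (k : nat -> nat) (q N : nat) : nat :=
  count (fun n => q %| k n) (iota 0 N).

Definition density_seq (k : nat -> nat) (q : nat) : nat -> R :=
  fun N => Rdiv (INR (count_div k q N)) (INR N).

(* Main.v *)
Require Import Defs.
From mathcomp Require Import all_boot.
From Stdlib Require Import Reals.
From mathcomp Require Import all_boot zify.
From Stdlib Require Import Ring ArithRing Classical Lra.
Set Implicit Arguments.
Unset Strict Implicit.
Unset Printing Implicit Defensive.

Section Digits.
Variables (b : nat) (D : {set 'I_b}).
Hypothesis hb : 3 <= b.
Hypothesis h0 : exists2 d : 'I_b, d \in D & nat_of_ord d = 0.
Hypothesis hm : 2 <= #|D|.

Definition sD := [seq x <- iota 0 b | x \in [seq val d | d <- enum D]].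
Definition mm := #|D|.
Definition dl i := nth 0 sD i.

Lemma mem_sD x : (x \in sD) = (x \in [seq val d | d <- enum D]).
Proof.
rewrite mem_filter mem_iota add0n /=.
case E: (x \in _) => //=.
by move/mapP: E => [d _ ->]; rewrite ltn_ord.
Qed.

Lemma size_sD : size sD = mm.
Proof.
rewrite /mm cardE -(size_map val).
apply: perm_size; apply: uniq_perm.
- by rewrite filter_uniq // iota_uniq.
- by rewrite map_inj_uniq ?enum_uniq //; apply: val_inj.
- by move=> x; rewrite mem_sD.
Qed.

Lemma sorted_sD : sorted ltn sD.
Proof. apply: sorted_filter; [exact: ltn_trans | exact: iota_ltn_sorted]. Qed.

Lemma dl_mono i j : i < j -> j < mm -> dl i < dl j.
Proof.
move=> ij jm.
apply: (sorted_ltn_nth ltn_trans 0 sorted_sD); rewrite ?inE ?size_sD //.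
exact: ltn_trans ij jm.
Qed.

Lemma dl_in i : i < mm -> exists2 d : 'I_b, d \in D & val d = dl i.
Proof.
move=> im.
have : dl i \in sD by rewrite /dl mem_nth // size_sD.
rewrite mem_sD => /mapP [d]; rewrite mem_enum => dD ->.
by exists d.
Qed.

Lemma dl_b i : i < mm -> dl i < b.
Proof. by move=> /dl_in [d _ <-]; apply: ltn_ord. Qed.

Lemma in_dl (d : 'I_b) : d \in D -> exists2 i, i < mm & dl i = val d.
Proof.
move=> dD.
have : val d \in sD by rewrite mem_sD; apply: map_f; rewrite mem_enum.
move=> H; exists (index (val d) sD); first by rewrite -size_sD index_mem.
by rewrite /dl nth_index.
Qed.

Lemma dl0 : dl 0 = 0.
Proof.
case: h0 => d dD d0.
case: (in_dl dD) => i im di.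
case: i im di => [|i] im di; first by rewrite di; exact: d0.
have := dl_mono (ltn0Sn i) im.
by rewrite di /= d0.
Qed.

Lemma mm_gt1 : 1 < mm. Proof. exact: hm. Qed.

Fixpoint phif (f n : nat) : nat :=
  if f is f'.+1 then dl (n %% mm) + b * phif f' (n %/ mm) else 0.
Definition phi n := phif n n.

Lemma phif0 f : phif f 0 = 0.
Proof. by elim: f => //= f IH; rewrite mod0n div0n IH dl0 muln0. Qed.

Lemma phif_indep f f' n : n <= f -> n <= f' -> phif f n = phif f' n.
Proof.
elim: f f' n => [|f IH] [|f'] n.
- by [].
- by rewrite leqn0 => /eqP -> _; rewrite !phif0.
- by rewrite leqn0 => _ /eqP ->; rewrite !phif0.
- move=> nf nf' /=; congr (_ + b * _).
  case: n nf nf' => [|n] nf nf'; first by rewrite div0n !phif0.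
  have lt : n.+1 %/ mm < n.+1 by rewrite ltn_Pdiv // ltnW // mm_gt1.
  by apply: IH; rewrite -ltnS; apply: leq_trans lt _.
Qed.

Lemma phi0 : phi 0 = 0. Proof. by []. Qed.

Lemma phiE n : phi n = dl (n %% mm) + b * phi (n %/ mm).
Proof.
case: n => [|n]; first by rewrite /= mod0n div0n dl0 muln0.
rewrite /phi /=; congr (_ + b * _); apply: phif_indep => //.
have lt : n.+1 %/ mm < n.+1 by rewrite ltn_Pdiv // ltnW // mm_gt1.
by rewrite -ltnS.
Qed.

Lemma phi_step a s : s < mm -> phi (a * mm + s) = dl s + b * phi a.
Proof.
move=> sm; rewrite phiE modnMDl divnMDl ?(ltnW (mm_gt1)) //.
by rewrite modn_small // divn_small // addn0.
Qed.

Lemma phi_block L a r : r < mm ^ L -> phi (a * mm ^ L + r) = phi a * b ^ L + phi r.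
Proof.
elim: L a r => [|L IH] a r.
  by rewrite !expn0 ltnS leqn0 => /eqP ->; rewrite !muln1 addn0 phi0 addn0.
move=> rL.
have mpos : 0 < mm by apply: ltnW; apply: mm_gt1.
have -> : a * mm ^ L.+1 + r = (a * mm ^ L + r %/ mm) * mm + r %% mm.
  by rewrite mulnDl -mulnA -expnSr -addnA -divn_eq.
rewrite phi_step ?ltn_mod // IH; last by rewrite ltn_divLR // -expnSr.
rewrite (phiE r) expnS; nia.
Qed.

Lemma phi_lt n : phi n < phi n.+1.
Proof.
have mpos : 0 < mm by apply: ltnW; apply: mm_gt1.
elim/ltn_ind: n => n IH.
rewrite {1 2}(divn_eq n mm) phi_step ?ltn_mod //.
set a := n %/ mm; set s := n %% mm.
have sm : s < mm by rewrite ltn_mod.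
case: (ltnP s.+1 mm) => [s1m|ms1].
  by rewrite -[(a * mm + s).+1]addnS phi_step // ltn_add2r dl_mono.
have es : s.+1 = mm by apply/eqP; rewrite eqn_leq ms1 sm.
rewrite -[(a * mm + s).+1]addnS es -mulSnr -[_ * mm]addn0 phi_step // dl0 add0n.
have alt : a < n.
  have s1 : 1 <= s by rewrite -ltnS es mm_gt1.
  rewrite /a ltn_Pdiv ?mm_gt1 //.
  by apply: leq_trans s1 _; rewrite /s leq_mod.
have := IH a alt.
have := dl_b sm.
move=> h1 h2.
have : b * (phi a).+1 <= b * phi a.+1 by rewrite leq_mul2l h2 orbT.
rewrite mulnS; lia.
Qed.

End Digits.

Section Range.
Variables (b : nat) (D : {set 'I_b}).
Hypothesis hb : 3 <= b.
Hypothesis h0 : exists2 d : 'I_b, d \in D & nat_of_ord d = 0.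
Hypothesis hm : 2 <= #|D|.

Lemma inC_step x s : inC D x -> s < mm D -> inC D (dl D s + b * x).
Proof.
move=> [k [d [dD ->]]] sm.
case: (dl_in sm) => ds dsD dsE.
exists k.+1, (fun j => if j is j'.+1 then d j' else ds); split.
  by case=> [|j] //= jk; apply: dD.
rewrite [RHS]big_ord_recl /= expn0 muln1 -dsE; congr (_ + _).
rewrite big_distrr /=; apply: eq_bigr => i _.
by rewrite /bump /= add1n expnS mulnCA.
Qed.

Lemma inC_phi n : inC D (phi D n).
Proof.
elim/ltn_ind: n => n IH.
case: n IH => [|n] IH.
  case: h0 => d0 d0D d0E.
  exists 0, (fun _ => d0); split => //.
  by rewrite big_ord1 d0E.
rewrite phiE //; apply: inC_step; last by rewrite ltn_mod; apply: ltnW; apply: mm_gt1.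
by apply: IH; rewrite ltn_Pdiv // mm_gt1.
Qed.

Lemma phi_inC x : inC D x -> exists n, phi D n = x.
Proof.
move=> [k [d [dD ->]]].
elim: k d dD => [|k IH] d dD.
  case: (in_dl (dD 0 (leqnn 0))) => i im iE.
  exists i; rewrite big_ord1 expn0 muln1 -iE.
  by have := phi_step h0 hm 0 im; rewrite mul0n add0n phi0 muln0 addn0.
have [n' En'] := IH (fun j => d j.+1) (fun j jk => dD j.+1 jk).
case: (in_dl (dD 0 (leq0n _))) => i im iE.
exists (n' * mm D + i); rewrite phi_step // En' [RHS]big_ord_recl /= expn0 muln1 iE.
congr (_ + _); rewrite big_distrr /=; apply: eq_bigr => j _.
by rewrite /bump /= add1n expnS mulnCA.
Qed.

End Range.

Lemma incr_mono (f : nat -> nat) : (forall n, f n < f n.+1) -> forall i j, i <= j -> f i <= f j.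
Proof.
move=> hf i j ij; rewrite -(subnKC ij); elim: (j - i) => [|t IH]; first by rewrite addn0.
by rewrite addnS; apply: leq_trans IH (ltnW (hf _)).
Qed.

Lemma incr_strict (f : nat -> nat) : (forall n, f n < f n.+1) -> forall i j, i < j -> f i < f j.
Proof.
move=> hf i j ij; apply: leq_trans (hf i) _; exact: incr_mono.
Qed.

Lemma incr_eq (f g : nat -> nat) : (forall n, f n < f n.+1) -> (forall n, g n < g n.+1) ->
  (forall x, (exists n, f n = x) <-> (exists n, g n = x)) -> forall n, f n = g n.
Proof.
move=> hf hg hfg.
elim/ltn_ind => n IH.
have [n1 E1] : exists n1, g n1 = f n by apply/hfg; exists n.
have [n2 E2] : exists n2, f n2 = g n by apply/hfg; exists n.
have h1 : n <= n1.
  rewrite leqNgt; apply/negP => lt.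
  have := IH n1 lt; rewrite E1 => e.
  by have := incr_strict hf lt; rewrite e ltnn.
have h2 : n <= n2.
  rewrite leqNgt; apply/negP => lt.
  have := IH n2 lt; rewrite E2 => e.
  by have := incr_strict hg lt; rewrite -e ltnn.
apply/eqP; rewrite eqn_leq.
have := incr_mono hg h1; have := incr_mono hf h2; rewrite E1 E2 => -> ->.
by [].
Qed.

Lemma cgD q x1 y1 x2 y2 : x1 = y1 %[mod q] -> x2 = y2 %[mod q] -> x1 + x2 = y1 + y2 %[mod q].
Proof. by move=> e1 e2; rewrite -modnDm e1 e2 modnDm. Qed.

Lemma cgM q x1 y1 x2 y2 : x1 = y1 %[mod q] -> x2 = y2 %[mod q] -> x1 * x2 = y1 * y2 %[mod q].
Proof. by move=> e1 e2; rewrite -modnMm e1 e2 modnMm. Qed.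


Lemma sum_shift (a n : nat) (f : nat -> nat) :
  \sum_(a <= x < a + n) f x = \sum_(0 <= x < n) f (a + x).
Proof.
rewrite -{1}[a]add0n big_addn addKn; apply: eq_bigr => i _; by rewrite addnC.
Qed.

Lemma sum_split (A B : nat) (f : nat -> nat) :
  \sum_(0 <= x < A * B) f x = \sum_(0 <= a < A) \sum_(0 <= r < B) f (a * B + r).
Proof.
elim: A => [|A IH]; first by rewrite mul0n !big_geq.
rewrite big_nat_recr //= mulSnr (big_cat_nat (n := A * B)) ?leq_addr // IH.
by congr (_ + _); apply: sum_shift.
Qed.

Lemma sum_ind (n t : nat) (g : nat -> nat) :
  \sum_(0 <= d < n) (t == d) * g d = (t < n) * g t.
Proof.
elim: n => [|n IH]; first by rewrite big_geq.
rewrite big_nat_recr //= IH ltnS.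
case: (ltngtP t n) => [tn|nt|->] /=.
- by rewrite mul0n addn0.
- by rewrite !mul0n.
- by rewrite ?mul0n ?mul1n ?add0n ?addn0.
Qed.


Lemma term_le (n r : nat) (f : nat -> nat) : r < n -> f r <= \sum_(0 <= x < n) f x.
Proof.
move=> rn; rewrite (big_cat_nat (n := r)) //= ?(ltnW rn) //.
rewrite [X in _ <= _ + X]big_ltn //.
by rewrite addnCA leq_addr.
Qed.

Lemma exists_idem (b q : nat) : 0 < q -> exists P, 0 < P /\ b ^ P * b ^ P = b ^ P %[mod q].
Proof.
move=> qpos.
have [i [j [ij Eij]]] : exists i j, i < j /\ b ^ i = b ^ j %[mod q].
  case: (boolP [exists x : 'I_q.+1, exists y : 'I_q.+1, (x < y) && (b ^ x == b ^ y %[mod q])]).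
    move/existsP => [x /existsP [y /andP [xy /eqP e]]].
    by exists x, y.
  move/negP => H; exfalso.
  pose f (x : 'I_q.+1) : 'I_q := Ordinal (ltn_pmod (b ^ x) qpos).
  have finj : injective f.
    move=> x y /(congr1 val) /= e; apply/val_inj => /=.
    case: (ltngtP x y) => // [xy|yx]; exfalso; apply: H.
      by apply/existsP; exists x; apply/existsP; exists y; rewrite xy e eqxx.
    by apply/existsP; exists y; apply/existsP; exists x; rewrite yx e eqxx.
  by have := leq_card f finj; rewrite !card_ord ltnn.
set p := j - i.
have pp : 0 < p by rewrite subn_gt0.
have per : forall x, i <= x -> b ^ (x + p) = b ^ x %[mod q].
  move=> x ix.
  have -> : x + p = (x - i) + j by rewrite /p; lia.
  have {2}-> : x = (x - i) + i by rewrite subnK.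
  by rewrite !expnD -modnMmr -Eij modnMmr.
have step : forall t n, b ^ (i + t + n * p) = b ^ (i + t) %[mod q].
  move=> t n; elim: n => [|n IH]; first by rewrite mul0n addn0.
  by rewrite mulSnr addnA per ?IH // -addnA leq_addr.
exists (p * i.+1); split; first by rewrite muln_gt0 pp.
have P_ge : i <= p * i.+1 by apply: leq_trans (leqnSn i) (leq_pmull _ pp).
rewrite -expnD.
have -> : p * i.+1 + p * i.+1 = i + (p * i.+1 - i) + i.+1 * p.
  by rewrite subnKC // mulnC.
by rewrite step subnKC.
Qed.

Section Mod.
Variables (m b q : nat) (phi : nat -> nat) (P : nat).
Hypotheses (hm : 1 < m) (hq : 0 < q) (hphi0 : phi 0 = 0)
  (hblock : forall L a r, r < m ^ L -> phi (a * m ^ L + r) = phi a * b ^ L + phi r)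
  (hP : 0 < P) (hE : b ^ P * b ^ P = b ^ P %[mod q]).

Local Notation M := (m ^ P).
Local Notation E := (b ^ P).

Lemma M_gt1 : 1 < M.
Proof. by rewrite -[1](expn0 m) ltn_exp2l. Qed.

Lemma M_gt0 : 0 < M.
Proof. exact: ltnW M_gt1. Qed.

Lemma EEt t : E * b ^ (P * t) = E %[mod q].
Proof.
elim: t => [|t IH]; first by rewrite muln0 expn0 muln1.
by rewrite mulnS expnD mulnA -modnMml hE modnMml.
Qed.

Lemma blk t a r : r < M ^ t -> E * phi (a * M ^ t + r) = E * phi a + E * phi r %[mod q].
Proof.
rewrite -expnM => rlt; rewrite hblock // mulnDr.
rewrite mulnCA -modnDml -modnMmr EEt modnMmr modnDml.
by rewrite mulnC.
Qed.

Definition Rch g := exists r, E * phi r = g %[mod q].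
Definition inZ c := exists r, q %| c + E * phi r.

Lemma Rch_phi r : Rch (E * phi r).
Proof. by exists r. Qed.

Lemma Rch0 : Rch 0.
Proof. by exists 0; rewrite hphi0 muln0. Qed.

Lemma Rch_add x y : Rch x -> Rch y -> Rch (x + y).
Proof.
move=> [r1 e1] [r2 e2].
exists (r2 * M ^ r1 + r1).
rewrite blk; last by apply: ltn_expl; apply: M_gt1.
by rewrite -modnDm e1 e2 modnDm addnC.
Qed.

Lemma Rch_mul t x : Rch x -> Rch (t * x).
Proof.
move=> Rx; elim: t => [|t IH]; first by rewrite mul0n; apply: Rch0.
by rewrite mulSn; apply: Rch_add.
Qed.

Lemma Rch_mod x y : x = y %[mod q] -> Rch x -> Rch y.
Proof. by move=> exy [r e]; exists r; rewrite e. Qed.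

Lemma dvd_mod x y : x = y %[mod q] -> (q %| x) = (q %| y).
Proof. by move=> e; rewrite /dvdn e. Qed.

Lemma inZ_step c r : inZ c -> inZ (c + E * phi r).
Proof.
move=> [r0 h0].
have : Rch (E * phi r0 + (q - 1) * (E * phi r)).
  by apply: Rch_add; [apply: Rch_phi | apply: Rch_mul; apply: Rch_phi].
move=> [r1 e1]; exists r1.
rewrite -addnA (dvd_mod (y := c + (E * phi r + (E * phi r0 + (q - 1) * (E * phi r))))); last first.
  by apply: cgD => //; apply: cgD.
have -> : c + (E * phi r + (E * phi r0 + (q - 1) * (E * phi r))) = (c + E * phi r0) + q * (E * phi r).
  by move: hq; case: (q) => [//|q'] _; rewrite subSS subn0 mulSn; nia.
by rewrite dvdn_add // dvdn_mulr.
Qed.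

Lemma inZ_mod c d : c = d %[mod q] -> inZ c -> inZ d.
Proof.
move=> e [r h]; exists r; rewrite -(dvd_mod (x := c + E * phi r)) //.
by rewrite -modnDml e modnDml.
Qed.

Lemma inZ_shift x a : inZ (x + E * phi a) <-> inZ x.
Proof.
split.
  move=> [r h].
  have [r1 e1] : Rch (E * phi a + E * phi r) by apply: Rch_add; apply: Rch_phi.
  exists r1; rewrite (dvd_mod (y := x + E * phi a + E * phi r)) //.
  by rewrite -addnA -modnDmr e1 modnDmr.
exact: inZ_step.
Qed.

Lemma inZ_conn c d : inZ c -> inZ d -> exists2 g, Rch g & c + g = d %[mod q].
Proof.
move=> [rc hc] [rd hd].
exists (E * phi rc + (q - 1) * (E * phi rd)).
  by apply: Rch_add; [apply: Rch_phi | apply: Rch_mul; apply: Rch_phi].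
apply/eqP; rewrite -(eqn_modDr (E * phi rd)).
have -> : c + (E * phi rc + (q - 1) * (E * phi rd)) + E * phi rd = (c + E * phi rc) + q * (E * phi rd).
  by move: hq; case: (q) => [//|q'] _; rewrite subSS subn0 mulSn; nia.
move: hc hd; rewrite /dvdn => /eqP hc /eqP hd.
by rewrite hd -modnDml hc add0n modnMr.
Qed.

Lemma K_exists : exists K, forall g, Rch g -> exists2 r, r < M ^ K & E * phi r = g %[mod q].
Proof.
have H : forall n, exists K, forall g, g < n -> Rch g -> exists2 r, r < M ^ K & E * phi r = g %[mod q].
  elim=> [|n [K HK]]; first by exists 0.
  case: (classic (Rch n)) => [[r0 e0]|nR].
    exists (maxn K r0.+1) => g; rewrite ltnS leq_eqVlt => /orP [/eqP ->|gn] Rg.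
      exists r0 => //; apply: leq_trans (ltn_expl _ M_gt1) _.
      by rewrite leq_exp2l ?M_gt1 // leq_max leqnSn orbT.
    have [r rl e] := HK g gn Rg; exists r => //; apply: leq_trans rl _.
    by rewrite leq_exp2l ?M_gt1 // leq_max leqnn.
  exists K => g; rewrite ltnS leq_eqVlt => /orP [/eqP ->|gn] Rg //.
  exact: HK.
have [K HK] := H q.
exists K => g Rg.
have [r rl e] := HK (g %% q) (ltn_pmod g hq) (Rch_mod (esym (modn_mod g q)) Rg).
by exists r => //; rewrite e modn_mod.
Qed.

Definition F j c := \sum_(0 <= r < M ^ j) (q %| c + E * phi r).

Lemma Fmod j c d : c = d %[mod q] -> F j c = F j d.
Proof.
move=> e; apply: eq_bigr => r _; congr nat_of_bool; apply: dvd_mod; exact: cgD.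
Qed.

Lemma F0 j c : ~ inZ c -> F j c = 0.
Proof.
move=> nZ; apply: big1 => r _; case: (boolP (q %| _)) => // h; exfalso; apply: nZ; by exists r.
Qed.

Lemma F_le j c : F j c <= M ^ j.
Proof.
rewrite -[X in _ <= X]muln1 -[X in _ <= X * 1](subn0 (M ^ j)) -sum_nat_const_nat.
by apply: leq_sum => r _; apply: leq_b1.
Qed.

Lemma Frec j i c : F (j + i) c = \sum_(0 <= r < M ^ i) F j (c + E * phi r).
Proof.
rewrite /F expnD sum_split exchange_big_nat; apply: eq_big_nat => r /andP [_ ri].
apply: eq_bigr => a _; congr nat_of_bool.
rewrite (dvd_mod (y := c + (E * phi a + E * phi r))); last by apply: cgD => //; apply: blk.
by rewrite (addnC (E * phi a)) addnA.
Qed.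

Lemma count1 x : \sum_(0 <= d < q) (q %| d + x) = 1.
Proof.
set y := x %% q; set t := (q - y) %% q.
have ty : (t + y) %% q = 0.
  rewrite /t; case: (posnP y) => [->|yp]; first by rewrite subn0 modnn add0n mod0n.
  rewrite [(q - y) %% q]modn_small; last by rewrite ltn_subrL yp hq.
  by rewrite subnK ?modnn //; apply: ltnW; rewrite ltn_pmod.
rewrite (eq_big_nat _ _ (F2 := fun d => (t == d) * 1)); first by rewrite sum_ind muln1 ltn_pmod.
move=> d /andP [_ dq]; rewrite muln1.
rewrite (dvd_mod (y := d + y)); last by apply: cgD => //; rewrite modn_mod.
rewrite /dvdn -ty eqn_modDr modn_small // [t %% q]modn_small ?ltn_pmod // eq_sym.
by [].
Qed.

Lemma Fsum j : \sum_(0 <= d < q) F j d = M ^ j.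
Proof.
rewrite /F exchange_big_nat /= (eq_bigr (fun _ => 1)); last by move=> r _; apply: count1.
by rewrite sum_nat_const_nat subn0 muln1.
Qed.

Section Doeblin.
Variable K : nat.
Hypothesis hK : forall g, Rch g -> exists2 r, r < M ^ K & E * phi r = g %[mod q].

Definition inZb c := has (fun r => q %| c + E * phi r) (iota 0 (M ^ K)).

Lemma inZbP c : reflect (inZ c) (inZb c).
Proof.
apply: (iffP hasP) => [[r _ h]|[r0 h0]]; first by exists r.
have [r rl e] := hK (Rch_phi r0).
exists r; first by rewrite mem_iota add0n rl.
by rewrite (dvd_mod (y := c + E * phi r0)) //; apply: cgD.
Qed.

Definition z := \sum_(0 <= d < q) inZb d.
Definition W := M ^ K - z.
Definition N c d := \sum_(0 <= r < M ^ K) ((c + E * phi r) %% q == d).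

Lemma inZ0 : inZ 0.
Proof. by exists 0; rewrite hphi0 muln0 dvdn0. Qed.

Lemma z_pos : 0 < z.
Proof.
apply: leq_trans (term_le (fun d => nat_of_bool (inZb d)) hq).
by case: inZbP => // /(_ inZ0).
Qed.

Lemma NF j c : F (j + K) c = \sum_(0 <= d < q) N c d * F j d.
Proof.
rewrite Frec.
rewrite (eq_bigr (fun r => \sum_(0 <= d < q) ((c + E * phi r) %% q == d) * F j d)); last first.
  move=> r _; rewrite sum_ind ltn_pmod // mul1n; apply: Fmod.
  by rewrite modn_mod.
rewrite exchange_big_nat; apply: eq_bigr => d _.
by rewrite /N big_distrl.
Qed.

Lemma Nsum c : \sum_(0 <= d < q) N c d = M ^ K.
Proof.
rewrite /N exchange_big_nat /=.
rewrite (eq_bigr (fun _ => 1)); last first.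
  move=> r _; rewrite (eq_bigr (fun d => ((c + E * phi r) %% q == d) * 1)); last by move=> d _; rewrite muln1.
  by rewrite sum_ind ltn_pmod.
by rewrite sum_nat_const_nat subn0 muln1.
Qed.

Lemma N_pos c d : inZ c -> inZ d -> d < q -> 0 < N c d.
Proof.
move=> Zc Zd dq.
have [g Rg e] := inZ_conn Zc Zd.
have [r rl er] := hK Rg.
apply: leq_trans (term_le (fun r => nat_of_bool ((c + E * phi r) %% q == d)) rl).
have : (c + E * phi r) %% q = d.
  by rewrite -(modn_small dq) -e; apply: cgD.
by move=> ->; rewrite eqxx.
Qed.

Lemma N_zero c d : inZ c -> ~ inZ d -> N c d = 0.
Proof.
move=> Zc nZd; apply: big1 => r _.
case: eqP => // e; exfalso; apply: nZd.
apply: (inZ_mod (c := c + E * phi r)); last by apply: inZ_step.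
by rewrite -e modn_mod.
Qed.

Lemma Fz j d : F j d = inZb d * F j d.
Proof.
case: inZbP => [_|nZ]; first by rewrite mul1n.
by rewrite F0.
Qed.

Lemma doeblin j Lo Hi : (forall d, inZ d -> Lo <= F j d <= Hi) ->
  forall c, inZ c -> M ^ j + W * Lo <= F (j + K) c <= M ^ j + W * Hi.
Proof.
move=> hb c Zc.
have decomp : \sum_(0 <= d < q) N c d * F j d =
   \sum_(0 <= d < q) inZb d * F j d + \sum_(0 <= d < q) inZb d * ((N c d - 1) * F j d).
  rewrite -big_split; apply: eq_big_nat => d /andP [_ dq] /=.
  case: inZbP => [Zd|nZd]; last by rewrite F0 // !muln0.
  rewrite !mul1n -{1}(subnK (N_pos Zc Zd dq)) mulnDl mul1n addnC.
  by [].
have s1 : \sum_(0 <= d < q) inZb d * F j d = M ^ j.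
  by rewrite -(Fsum j); apply: eq_bigr => d _; rewrite -Fz.
have sA : \sum_(0 <= d < q) inZb d * (N c d - 1) = W.
  rewrite /W -(Nsum c) /z.
  have -> : \sum_(0 <= d < q) N c d =
     \sum_(0 <= d < q) inZb d * (N c d - 1) + \sum_(0 <= d < q) inZb d.
    rewrite -big_split; apply: eq_big_nat => d /andP [_ dq] /=.
    case: inZbP => [Zd|nZd]; last by rewrite N_zero.
    by rewrite mul1n subnK // N_pos.
  by rewrite addnK.
rewrite NF decomp s1.
have up : \sum_(0 <= d < q) inZb d * ((N c d - 1) * F j d) <= W * Hi.
  rewrite -sA big_distrl /=; apply: leq_sum => d _.
  case: inZbP => [Zd|_]; last by rewrite !mul0n.
  by rewrite !mul1n leq_mul2l; case/andP: (hb d Zd) => _ ->; rewrite orbT.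
have lo : W * Lo <= \sum_(0 <= d < q) inZb d * ((N c d - 1) * F j d).
  rewrite -sA big_distrl /=; apply: leq_sum => d _.
  case: inZbP => [Zd|_]; last by rewrite !mul0n.
  by rewrite !mul1n leq_mul2l; case/andP: (hb d Zd) => -> _; rewrite orbT.
by rewrite leq_add2l lo leq_add2l up.
Qed.

Lemma iterZ n : exists Lo, forall c, inZ c -> Lo <= F (n * K) c <= Lo + W ^ n.
Proof.
elim: n => [|n [Lo HL]].
  exists 0 => c _; rewrite mul0n expn0 add0n leq0n /=.
  by have := F_le 0 c; rewrite expn0.
exists (M ^ (n * K) + W * Lo) => c Zc.
rewrite mulSnr.
have := doeblin (Hi := Lo + W ^ n) HL Zc.
by rewrite mulnDr -addnA -expnS.
Qed.

Lemma zbound n c : inZ c ->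
  z * F (n * K) c <= M ^ (n * K) + z * W ^ n /\ M ^ (n * K) <= z * F (n * K) c + z * W ^ n.
Proof.
move=> Zc.
have [Lo HL] := iterZ n.
have sF : \sum_(0 <= d < q) inZb d * F (n * K) d = M ^ (n * K).
  by rewrite -(Fsum (n * K)); apply: eq_bigr => d _; rewrite -Fz.
have zlo : z * Lo <= M ^ (n * K).
  rewrite -sF /z big_distrl /=; apply: leq_sum => d _.
  case: inZbP => [Zd|_]; last by rewrite !mul0n.
  by rewrite !mul1n; case/andP: (HL d Zd).
have zhi : M ^ (n * K) <= z * Lo + z * W ^ n.
  rewrite -mulnDr -sF /z big_distrl /=; apply: leq_sum => d _.
  case: inZbP => [Zd|_]; last by rewrite !mul0n.
  by rewrite !mul1n; case/andP: (HL d Zd).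
case/andP: (HL c Zc) => h1 h2.
have a1 : z * Lo <= z * F (n * K) c by rewrite leq_mul2l h1 orbT.
have a2 : z * F (n * K) c <= z * Lo + z * W ^ n by rewrite -mulnDr leq_mul2l h2 orbT.
split; lia.
Qed.



Definition G0 := \sum_(0 <= s < M) inZb (phi s).

Lemma G0_pos : 0 < G0.
Proof.
apply: leq_trans (term_le (fun s => nat_of_bool (inZb (phi s))) M_gt0).
by rewrite hphi0; case: inZbP => // /(_ inZ0).
Qed.

Lemma G0_le : G0 <= M.
Proof.
rewrite -[X in _ <= X]muln1 -[X in _ <= X * 1](subn0 M) -sum_nat_const_nat.
by apply: leq_sum => r _; apply: leq_b1.
Qed.

Lemma z_le : z <= q.
Proof.
rewrite -[X in _ <= X]muln1 -[X in _ <= X * 1](subn0 q) -sum_nat_const_nat.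
by apply: leq_sum => r _; apply: leq_b1.
Qed.

Definition Bn n := M ^ (n * K) * M.

Definition Cnt n a := \sum_(a * Bn n <= x < a * Bn n + Bn n) (q %| phi x).

Lemma block_count n a : Cnt n a = \sum_(0 <= s < M) F (n * K) (phi s + E * phi a).
Proof.
rewrite /Cnt /Bn sum_shift sum_split exchange_big_nat; apply: eq_big_nat => s /andP [_ sM].
rewrite /F; apply: eq_big_nat => y /andP [_ yl]; congr nat_of_bool.
have -> : a * (M ^ (n * K) * M) + (y * M + s) = (a * m ^ (P * (n * K)) + y) * m ^ P + s.
  by rewrite -expnM; nia.
rewrite hblock // hblock; last by rewrite expnM.
apply: dvd_mod.
have -> : (phi a * b ^ (P * (n * K)) + phi y) * E + phi s =
    phi s + phi a * (E * b ^ (P * (n * K))) + E * phi y by nia.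
apply: cgD => //; apply: cgD => //.
by rewrite mulnC; apply: cgM => //; apply: EEt.
Qed.

Lemma block_bound n a :
  z * Cnt n a <= G0 * M ^ (n * K) + M * (z * W ^ n) /\
  G0 * M ^ (n * K) <= z * Cnt n a + M * (z * W ^ n).
Proof.
have pt : forall s, z * F (n * K) (phi s + E * phi a) <= inZb (phi s) * M ^ (n * K) + z * W ^ n /\
                    inZb (phi s) * M ^ (n * K) <= z * F (n * K) (phi s + E * phi a) + z * W ^ n.
  move=> s; case: inZbP => [Zs|nZs].
    by rewrite mul1n; apply: zbound; apply/inZ_shift.
  rewrite F0 ?muln0 ?mul0n // => h; apply: nZs; exact: (proj1 (inZ_shift _ _) h).
have eM : M * (z * W ^ n) = \sum_(0 <= s < M) z * W ^ n by rewrite sum_nat_const_nat subn0.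
rewrite block_count eM /G0 [z * _]big_distrr [_ * M ^ _]big_distrl /= -!big_split /=.
split; apply: leq_sum => s _; by case: (pt s).
Qed.


End Doeblin.

End Mod.

Section RealPart.
Local Open Scope R_scope.

Lemma INRD m n : INR (m + n)%N = (INR m + INR n).
Proof. by rewrite -plusE plus_INR. Qed.

Lemma INRM m n : INR (m * n)%N = (INR m * INR n).
Proof. by rewrite -multE mult_INR. Qed.

Lemma INRX m n : INR (m ^ n)%N = (INR m ^ n).
Proof. elim: n => [|n IH]; first by rewrite expn0. by rewrite expnS INRM IH. Qed.

Lemma INR_le m n : (m <= n)%N -> (INR m <= INR n).
Proof. by move/leP; apply: le_INR. Qed.

Lemma INR_lt m n : (m < n)%N -> (INR m < INR n).
Proof. by move/ltP; apply: lt_INR. Qed.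

Lemma count_sum (f : nat -> bool) N : count f (iota 0 N) = \sum_(0 <= x < N) f x.
Proof.
rewrite /index_iota subn0; elim: (iota 0 N) => [|x s IH]; first by rewrite big_nil.
by rewrite big_cons /= IH.
Qed.

Lemma sum_le_len (f : nat -> bool) a n : (\sum_(a <= x < a + n) f x <= n)%N.
Proof.
rewrite sum_shift -[X in (_ <= X)%N]muln1 -[X in (_ <= X * 1)%N](subn0 n) -sum_nat_const_nat.
by apply: leq_sum => r _; apply: leq_b1.
Qed.

Lemma crit (f : nat -> bool) (c : R) : (0 <= c) ->
  (forall eps, (0 < eps) -> exists B, (0 < B)%N /\
     forall a, (Rabs (INR (\sum_(a * B <= x < a * B + B) f x) - c * INR B) <= eps * INR B)) ->
  Un_cv (fun N => INR (count f (iota 0 N)) / INR N) c.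
Proof.
move=> c0 H eps eps0.
have [B [B0 HB]] := H (eps / 2) ltac:(lra).
set S := fun N => \sum_(0 <= x < N) f x.
have claim1 : forall a, (Rabs (INR (S (a * B)%N) - c * INR (a * B)%N) <= eps / 2 * INR (a * B)%N).
  elim=> [|a IH]; first by rewrite mul0n /S big_geq //= !Rmult_0_r Rminus_0_r Rabs_R0; lra.
  rewrite /S mulSnr (big_cat_nat (n := (a * B)%N)) ?leq_addr //= INRD.
  rewrite INRD.
  have := HB a.
  move: IH; rewrite /S.
  set u := INR (\sum_(0 <= x < a * B) f x).
  set v := INR (\sum_(a * B <= x < a * B + B) f x).
  move=> h1 h2.
  have := Rabs_triang (u - c * INR (a * B)%N) (v - c * INR B).
  have -> : (u - c * INR (a * B)%N + (v - c * INR B) = u + v - c * (INR (a * B)%N + INR B)) by ring.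
  lra.
have [N0 HN0] := INR_archimed (eps / 2) ((1 + c) * INR B) ltac:(lra).
exists (N0.+1) => N /leP HN.
rewrite /R_dist count_sum.
have Npos : (0 < INR N) by apply: lt_0_INR; apply/ltP; exact: leq_trans (ltn0Sn N0) HN.
have N0N : (INR N0 < INR N) by apply: INR_lt.
set a := (N %/ B)%N; set r := (N %% B)%N.
have eN : N = (a * B + r)%N by rewrite /a /r -divn_eq.
have rB : (r < B)%N by rewrite /r ltn_mod.
have hS : S N = (S (a * B) + \sum_(a * B <= x < a * B + r) f x)%N.
  by rewrite /S {1}eN (big_cat_nat (n := (a * B)%N)) ?leq_addr.
have hR := sum_le_len f (a * B) r.
move: hS; rewrite /S => ->; rewrite INRD.
set u := INR (\sum_(0 <= x < a * B) f x).
set v := INR (\sum_(a * B <= x < a * B + r) f x).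
have h1 := claim1 a; rewrite /S -/u in h1.
have vr : (0 <= v <= INR r) by split; [apply: pos_INR | apply: INR_le].
have rBr : (INR r <= INR B) by apply: INR_le; apply: ltnW.
have eNr : INR N = (INR (a * B)%N + INR r) by rewrite {1}eN INRD.
have aBN : (INR (a * B)%N <= INR N) by rewrite eNr; have := pos_INR r; lra.
have key : (Rabs (u + v - c * INR N) < eps * INR N).
  have := Rabs_triang (u - c * INR (a * B)%N) (v - c * INR r).
  have -> : (u - c * INR (a * B)%N + (v - c * INR r) = u + v - c * INR N) by rewrite eNr; ring.
  have hv : (Rabs (v - c * INR r) <= (1 + c) * INR B).
    apply: Rabs_le; split; nra.
  nra.
have -> : ((u + v) / INR N - c = (u + v - c * INR N) / INR N) by field; lra.
have [k1 k2] := Rabs_def2 _ _ key.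
apply: Rabs_def1.
  apply: (Rmult_lt_reg_r (INR N)) => //.
  rewrite /Rdiv Rmult_assoc Rinv_l; lra.
apply: (Rmult_lt_reg_r (INR N)) => //.
rewrite /Rdiv Rmult_assoc Rinv_l; lra.
Qed.

Lemma density_phi (m b q : nat) (phi : nat -> nat) : (1 < m)%N -> (0 < q)%N -> phi 0%N = 0%N ->
  (forall L a r, (r < m ^ L)%N -> phi (a * m ^ L + r)%N = (phi a * b ^ L + phi r)%N) ->
  exists L, 0 < L /\ Un_cv (fun N => INR (count (fun n => q %| phi n) (iota 0 N)) / INR N) L.
Proof.
move=> hm hq hphi0 hblock.
have [P [hP hE]] := exists_idem b hq.
have [K hK] := K_exists b phi hm hq hP.
set M := (m ^ P)%N.
have M0 : (0 < M)%N by rewrite expn_gt0 (ltnW hm).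
set zz := z m b q phi P K; set G := G0 m b q phi P K; set WW := W m b q phi P K.
have z0 : (0 < zz)%N by apply: (z_pos hq hphi0 hK).
have G00 : (0 < G)%N by apply: (G0_pos hm hphi0 hP hK).
have Zr : 0 < INR zz by apply: lt_0_INR; apply/ltP.
have Mr : 0 < INR M by apply: lt_0_INR; apply/ltP.
have Gr : 0 < INR G by apply: lt_0_INR; apply/ltP.
exists (INR G / (INR zz * INR M)); split.
  by apply: Rdiv_lt_0_compat => //; apply: Rmult_lt_0_compat.
apply: crit; first by apply: Rlt_le; apply: Rdiv_lt_0_compat => //; apply: Rmult_lt_0_compat.
move=> eps eps0.
set Y := INR (M ^ K).
have Y0 : 0 < Y by apply: lt_0_INR; apply/ltP; rewrite expn_gt0 M0.
have WY : (WW < M ^ K)%N by rewrite /WW /W -/M ltn_subrL z0 expn_gt0 M0.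
set th := INR WW / Y.
have th0 : 0 <= th by apply: Rle_mult_inv_pos => //; apply: pos_INR.
have th1 : th < 1.
  rewrite /th; apply: (Rmult_lt_reg_r Y) => //.
  rewrite /Rdiv Rmult_assoc Rinv_l ?Rmult_1_l ?Rmult_1_r; last by lra.
  by apply: lt_INR; apply/ltP.
have [n0 Hn0] := pow_lt_1_zero th ltac:(rewrite Rabs_right; lra) eps eps0.
have := Hn0 n0 (le_n n0); rewrite Rabs_right; last by apply: Rle_ge; apply: pow_le.
move=> hth.
exists (Bn m P K n0); split; first by rewrite /Bn muln_gt0 expn_gt0 M0.
move=> a.
have [b1 b2] := block_bound hm hq hphi0 hblock hP hE hK n0 a.
move: b1 b2; rewrite /Bn -/M.
set C := Cnt m q phi P K n0 a.
move=> /INR_le b1 /INR_le b2.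
rewrite !INRD !INRM (INRX M) (INRX WW) -/zz -/G -/WW in b1 b2.
rewrite INRM INRX.
set X := INR M ^ (n0 * K).
have X0 : 0 < X by apply: pow_lt.
have eX : X = Y ^ n0 by rewrite /X /Y INRX -pow_mult mulnC.
have eW : INR WW ^ n0 = th ^ n0 * Y ^ n0.
  by rewrite -Rpow_mult_distr /th /Rdiv Rmult_assoc Rinv_l ?Rmult_1_r //; lra.
have hW : INR WW ^ n0 <= eps * X.
  rewrite eW eX; apply: Rmult_le_compat_r; first by apply: pow_le; lra.
  lra.
have eq1 : INR C - INR G / (INR zz * INR M) * (X * INR M) = (INR zz * INR C - INR G * X) / INR zz.
  by field; lra.
rewrite eq1.
have hWW : 0 <= INR WW ^ n0 by apply: pow_le; apply: pos_INR.
have hMZ : INR M * INR zz * INR WW ^ n0 <= INR M * INR zz * (eps * X).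
  apply: Rmult_le_compat_l => //; nra.
rewrite -/X in b1 b2.
have eD : (INR zz * INR C - INR G * X) / INR zz * INR zz = INR zz * INR C - INR G * X by field; lra.
apply: Rabs_le; split; apply: (Rmult_le_reg_r (INR zz)) => //; rewrite eD; nra.
Qed.

End RealPart.

From Stdlib Require Import Reals.

Theorem mainTheorem10 (b : nat) (D : {set 'I_b}) (k : nat -> nat) :
  3 <= b ->
  (exists2 d : 'I_b, d \in D & nat_of_ord d = 0) ->
  2 <= #|D| ->
  #|D| < b ->
  (forall n, k n < k n.+1) ->
  (forall x, inC D x <-> exists n, k n = x) ->
  forall q : nat, 0 < q ->
    exists L : R, (0 < L)%R /\ Un_cv (density_seq k q) L.
Proof.
move=> hb h0 hm _ hk hC q hq.
have ek : forall n, k n = phi D n.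
  apply: incr_eq => //; first exact: phi_lt.
  move=> x; rewrite -hC; split; first exact: phi_inC.
  by move=> [n <-]; apply: inC_phi.
have [L [L0 HL]] := density_phi (mm_gt1 hm) hq (phi0 D) (phi_block hb h0 hm).
exists L; split => // eps e0.
have [N HN] := HL eps e0.
exists N => n hn.
rewrite /density_seq /count_div (eq_count (a2 := fun n => q %| phi D n)); first exact: HN.
by move=> x /=; rewrite ek.
Qed.
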